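(* Let $M$ be a dihedral axial decomposition algebra of Majorana type $(\eta,\eta)$ over a field $\mathbb{F}$ with $\operatorname{char}\mathbb{F}\neq2$, where $\eta\in\mathbb{F}\setminus\{0,1,\tfrac12\}$, with generating axes $(a_i)_{i\in\mathbb{Z}}$. Let $\mu\in\mathbb{F}$ be such that $a_0p_{2,1}=\frac{(2\eta-1)(4\lambda_1-3\eta)}{2\eta}(2p_{1,0}+\eta(a_1+a_{-1}))+\mu a_0$. If $\lambda_1=\frac{3\eta}{4}$, then $p_{2,1}=p_{2,0}$ or $\mu=0$.
   Context: $M$ is a commutative nonassociative $\mathbb{F}$-algebra. With $\Phi(0)=0,\Phi(1)=1,\Phi(2)=\Phi(3)=\eta$, an axis $a\in M$ is an element together with a decomposition $M=\bigoplus_{i=0}^3M^i(a)$ such that $xa=\Phi(i)x$ for $x\in M^i(a)$, $M^1(a)=\mathbb{F}a$, and $M^0(a)M^i(a)\subset M^i(a)$ for all $i$, $M^2(a)M^2(a)\subset M^0(a)\oplus M^1(a)$, $M^2(a)M^3(a)\subset M^3(a)$, $M^3(a)M^3(a)\subset M^0(a)\oplus M^1(a)\oplus M^2(a)$. The Miyamoto involution $\tau(a)$ is the automorphism acting as $1$ on $M^0(a)\oplus M^1(a)\oplus M^2(a)$ and $-1$ on $M^3(a)$. $M$ is dihedral with axes $(a_i)_{i\in\mathbb{Z}}$ if: $M$ is generated by the $a_i$; $a_i\mapsto a_{i+1}$ extends to an automorphism of $M$; and $\tau(a_j)(a_i)=a_{2j-i}$ for all $i,j$. For $i,j\in\mathbb{Z}$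 put $p_{i,j}=a_ja_{i+j}-\eta(a_j+a_{i+j})$. It is known that $a_0p_{i,0}\in\mathbb{F}a_0$; the scalar $\lambda_i\in\mathbb{F}$ is defined by $a_0p_{i,0}=((1-\eta)\lambda_i-\eta)a_0$. (Such a $\mu$ exists by a proposition of the paper.) *)

(* Defs.v *)
From HB Require Import structures.
From mathcomp Require Import all_boot all_order all_algebra.
Set Implicit Arguments. Unset Strict Implicit. Unset Printing Implicit Defensive.
Import Order.TTheory GRing.Theory Num.Theory.
Local Open Scope ring_scope.

Section AxialDefs.
Variables (F : fieldType) (M : lmodType F).

Definition comm_algebra_product (mul : M -> M -> M) : Prop :=
  (forall x y, mul x y = mul y x) /\
  (forall (c : F) x y z, mul (c *: x + y) z = c *: mul x z + mul y z).

Definition subspace (S : M -> Prop) : Prop :=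
  S 0 /\ forall (c : F) x y, S x -> S y -> S (c *: x + y).

Definition Phi (eta : F) (i : nat) : F :=
  match i with 0%N => 0 | 1%N => 1 | _ => eta end.

(* a is an axis with decomposition M = E 0 + E 1 + E 2 + E 3 (direct),
   of Majorana type (eta, eta) as in the context. Only E 0..E 3 matter. *)
Record axis (mul : M -> M -> M) (eta : F) (a : M) (E : nat -> M -> Prop)
  : Prop := {
  axis_sub : forall i, (i < 4)%N -> subspace (E i);
  axis_span : forall x, exists x0 x1 x2 x3,
      [/\ E 0%N x0, E 1%N x1, E 2%N x2, E 3%N x3 & x = x0 + x1 + x2 + x3];
  axis_indep : forall x0 x1 x2 x3,
      E 0%N x0 -> E 1%N x1 -> E 2%N x2 -> E 3%N x3 ->
      x0 + x1 + x2 + x3 = 0 -> [/\ x0 = 0, x1 = 0, x2 = 0 & x3 = 0];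
  axis_eig : forall i x, (i < 4)%N -> E i x -> mul x a = Phi eta i *: x;
  axis_M1 : forall x, E 1%N x <-> exists c : F, x = c *: a;
  axis_fus0 : forall i x y, (i < 4)%N -> E 0%N x -> E i y -> E i (mul x y);
  axis_fus22 : forall x y, E 2%N x -> E 2%N y ->
      exists y0 y1, [/\ E 0%N y0, E 1%N y1 & mul x y = y0 + y1];
  axis_fus23 : forall x y, E 2%N x -> E 3%N y -> E 3%N (mul x y);
  axis_fus33 : forall x y, E 3%N x -> E 3%N y ->
      exists y0 y1 y2, [/\ E 0%N y0, E 1%N y1, E 2%N y2 & mul x y = y0 + y1 + y2]
}.

Definition miyamoto_image (E : nat -> M -> Prop) (x y : M) : Prop :=
  forall x0 x1 x2 x3, E 0%N x0 -> E 1%N x1 -> E 2%N x2 -> E 3%N x3 ->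
    x = x0 + x1 + x2 + x3 -> y = x0 + x1 + x2 - x3.

Definition generates (mul : M -> M -> M) (a : int -> M) : Prop :=
  forall S : M -> Prop, subspace S ->
    (forall x y, S x -> S y -> S (mul x y)) ->
    (forall i, S (a i)) -> forall x, S x.

Definition algebra_automorphism (mul : M -> M -> M) (f : M -> M) : Prop :=
  [/\ bijective f,
      forall (c : F) x y, f (c *: x + y) = c *: f x + f y
    & forall x y, f (mul x y) = mul (f x) (f y)].

Record dihedral (mul : M -> M -> M) (eta : F) (a : int -> M)
  (E : int -> nat -> M -> Prop) : Prop := {
  dih_axes : forall i, axis mul eta (a i) (E i);
  dih_gen : generates mul a;
  dih_shift : exists f, algebra_automorphism mul f /\ forall i, f (a i) = a (i + 1);
  dih_tau : forall i j, miyamoto_image (E j) (a i) (a (2 * j - i))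
}.

Definition pp (mul : M -> M -> M) (eta : F) (a : int -> M) (i j : int) : M :=
  mul (a j) (a (i + j)) - eta *: (a j + a (i + j)).

End AxialDefs.

(* Main.v *)
Require Import Defs.
From HB Require Import structures.
From mathcomp Require Import all_boot all_order all_algebra.
Import Order.TTheory GRing.Theory Num.Theory.
Set Implicit Arguments. Unset Strict Implicit. Unset Printing Implicit Defensive.
Local Open Scope ring_scope.

Section Helpers.
Variables (F : fieldType) (M : lmodType F) (mul : M -> M -> M).
Hypothesis Hc : comm_algebra_product mul.

Lemma mC x y : mul x y = mul y x.
Proof. by case: Hc. Qed.

Lemma mDZl c x y z : mul (c *: x + y) z = c *: mul x z + mul y z.
Proof. by case: Hc. Qed.

Lemma m0l z : mul 0 z = 0.
Proof.
have := mDZl 1 0 0 z; rewrite !scale1r addr0.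
move=> /(congr1 (fun v => v - mul 0 z)); rewrite subrr addrK => E.
by rewrite -E.
Qed.

Lemma mDl x y z : mul (x + y) z = mul x z + mul y z.
Proof. by have := mDZl 1 x y z; rewrite !scale1r. Qed.

Lemma mZl c x z : mul (c *: x) z = c *: mul x z.
Proof. by have := mDZl c x 0 z; rewrite m0l !addr0. Qed.

Lemma mNl x z : mul (- x) z = - mul x z.
Proof. by rewrite -scaleN1r mZl scaleN1r. Qed.

Lemma mBl x y z : mul (x - y) z = mul x z - mul y z.
Proof. by rewrite mDl mNl. Qed.

Lemma mDr x y z : mul z (x + y) = mul z x + mul z y.
Proof. by rewrite mC mDl !(mC z). Qed.
Lemma mZr c x z : mul z (c *: x) = c *: mul z x.
Proof. by rewrite mC mZl mC. Qed.
Lemma mBr x y z : mul z (x - y) = mul z x - mul z y.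
Proof. by rewrite mC mBl !(mC z). Qed.
Lemma m0r z : mul z 0 = 0.
Proof. by rewrite mC m0l. Qed.

Lemma sub0 (S : M -> Prop) : subspace S -> S 0.
Proof. by case. Qed.
Lemma subD (S : M -> Prop) x y : subspace S -> S x -> S y -> S (x + y).
Proof. by case=> _ H Sx Sy; have := H 1 x y Sx Sy; rewrite scale1r. Qed.
Lemma subZ (S : M -> Prop) c x : subspace S -> S x -> S (c *: x).
Proof. by case=> H0 H Sx; have := H c x 0 Sx H0; rewrite addr0. Qed.
Lemma subN (S : M -> Prop) x : subspace S -> S x -> S (- x).
Proof. by move=> Ss Sx; rewrite -scaleN1r; apply: subZ. Qed.
Lemma subB (S : M -> Prop) x y : subspace S -> S x -> S y -> S (x - y).
Proof. by move=> Ss Sx Sy; apply: subD => //; apply: subN. Qed.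

End Helpers.

Section AxisLemmas.
Variables (F : fieldType) (M : lmodType F) (mul : M -> M -> M).
Hypothesis Hc : comm_algebra_product mul.
Variables (eta : F) (a : M) (E : nat -> M -> Prop).
Hypothesis Ha : axis mul eta a E.
Hypothesis Heta : eta != 0.

Lemma E0s : subspace (E 0%N). Proof. exact: (axis_sub Ha). Qed.
Lemma E1s : subspace (E 1%N). Proof. exact: (axis_sub Ha). Qed.
Lemma E2s : subspace (E 2%N). Proof. exact: (axis_sub Ha). Qed.
Lemma E3s : subspace (E 3%N). Proof. exact: (axis_sub Ha). Qed.

Lemma E1a : E 1%N a.
Proof. by apply/(axis_M1 Ha); exists 1; rewrite scale1r. Qed.

Lemma eig0 x : E 0%N x -> mul x a = 0.
Proof. by move=> H; rewrite (axis_eig Ha (i:=0%N)) // scale0r. Qed.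
Lemma eig1 x : E 1%N x -> mul x a = x.
Proof. by move=> H; rewrite (axis_eig Ha (i:=1%N)) // scale1r. Qed.
Lemma eig2 x : E 2%N x -> mul x a = eta *: x.
Proof. by move=> H; rewrite (axis_eig Ha (i:=2%N)). Qed.
Lemma eig3 x : E 3%N x -> mul x a = eta *: x.
Proof. by move=> H; rewrite (axis_eig Ha (i:=3%N)). Qed.

Lemma decomp_eq x0 x1 x2 x3 y0 y1 y2 y3 :
  E 0%N x0 -> E 1%N x1 -> E 2%N x2 -> E 3%N x3 ->
  E 0%N y0 -> E 1%N y1 -> E 2%N y2 -> E 3%N y3 ->
  x0 + x1 + x2 + x3 = y0 + y1 + y2 + y3 ->
  [/\ x0 = y0, x1 = y1, x2 = y2 & x3 = y3].
Proof.
move=> X0 X1 X2 X3 Y0 Y1 Y2 Y3 e.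
have := (axis_indep Ha (subB E0s X0 Y0) (subB E1s X1 Y1) (subB E2s X2 Y2) (subB E3s X3 Y3)).
have -> : x0 - y0 + (x1 - y1) + (x2 - y2) + (x3 - y3) =
          (x0 + x1 + x2 + x3) - (y0 + y1 + y2 + y3).
  by rewrite !opprD !addrA (ACl (1*3*5*7*2*4*6*8)).
rewrite e subrr => /(_ erefl) [] /eqP; rewrite subr_eq0 => /eqP ->.
move=> /eqP; rewrite subr_eq0 => /eqP ->.
move=> /eqP; rewrite subr_eq0 => /eqP ->.
by move=> /eqP; rewrite subr_eq0 => /eqP ->.
Qed.

Lemma mul_a_decomp x0 x1 x2 x3 :
  E 0%N x0 -> E 1%N x1 -> E 2%N x2 -> E 3%N x3 ->
  mul a (x0 + x1 + x2 + x3) = x1 + eta *: x2 + eta *: x3.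
Proof.
move=> X0 X1 X2 X3.
rewrite !(mDr Hc) !(mC Hc a) eig0 // eig1 // eig2 // eig3 //.
by rewrite add0r.
Qed.

Lemma E01 x r : mul a x = r *: a -> exists x0, E 0%N x0 /\ x = r *: a + x0.
Proof.
move=> H.
have [x0 [x1 [x2 [x3 [X0 X1 X2 X3 ex]]]]] := axis_span Ha x.
move: H; rewrite ex mul_a_decomp // => H.
have := @decomp_eq 0 x1 (eta *: x2) (eta *: x3) 0 (r *: a) 0 0
  (sub0 E0s) X1 (subZ _ E2s X2) (subZ _ E3s X3) (sub0 E0s) (subZ _ E1s E1a)
  (sub0 E2s) (sub0 E3s).
rewrite !add0r !addr0 H => /(_ erefl) [_ -> /eqP e2 /eqP e3].
move: e2 e3; rewrite !scaler_eq0 (negbTE Heta) /= => /eqP -> /eqP ->.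
exists x0; split=> //.
by rewrite !addr0 addrC.
Qed.

Lemma pp_form x0 x1 x2 x3 :
  E 0%N x0 -> E 1%N x1 -> E 2%N x2 -> E 3%N x3 ->
  mul a (x0 + x1 + x2 + x3) - eta *: (a + (x0 + x1 + x2 + x3)) =
  (1 - eta) *: x1 - eta *: a - eta *: x0.
Proof.
move=> X0 X1 X2 X3; rewrite mul_a_decomp //.
rewrite !scalerDr scalerBl scale1r !opprD !addrA.
by rewrite (ACl (((((1*6)*4)*5)*(2*7))*(3*8))) /= !subrr !addr0.
Qed.

Lemma principle z0 z1 z2 z3 R0 r rb :
  E 0%N z0 -> E 1%N z1 -> E 2%N z2 -> E 3%N z3 -> E 0%N R0 ->
  mul (z0 + z1 + z2 + z3) (r *: a + R0) = rb *: (z0 + z1 + z2 + z3) ->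
  mul z0 R0 = rb *: z0.
Proof.
move=> Z0 Z1 Z2 Z3 R H.
have [be ez1] : exists be, z1 = be *: a by apply/(axis_M1 Ha).
subst z1.
move: H; rewrite (mDr Hc) (mZr Hc) (mC Hc _ a) mul_a_decomp //.
rewrite !(mDl Hc) (mZl Hc) (mC Hc a) eig0 // scaler0 addr0.
rewrite !scalerDr !addrA (ACl (((4*1)*(2*5))*(3*6))) /= => H.
have := @decomp_eq (mul z0 R0) (r *: (be *: a)) (r *: (eta *: z2) + mul z2 R0)
   (r *: (eta *: z3) + mul z3 R0) (rb *: z0) (rb *: (be *: a)) (rb *: z2) (rb *: z3).
have m0 : E 0%N (mul z0 R0) by rewrite (mC Hc); apply: (axis_fus0 Ha).
have m2 : E 2%N (mul z2 R0) by rewrite (mC Hc); apply: (axis_fus0 Ha).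
have m3 : E 3%N (mul z3 R0) by rewrite (mC Hc); apply: (axis_fus0 Ha).
have Ea : E 1%N (be *: a) by apply/(axis_M1 Ha); exists be.
case=> //.
- by apply: subZ E1s _.
- by apply: subD E2s _ _ => //; do 2 apply: subZ E2s _.
- by apply: subD E3s _ _ => //; do 2 apply: subZ E3s _.
- by apply: subZ E0s _.
- by apply: subZ E1s _.
- by apply: subZ E2s _.
- by apply: subZ E3s _.
Qed.

Lemma frame x0 x1 x2 x3 S0 mu :
  E 0%N x0 -> E 1%N x1 -> E 2%N x2 -> E 3%N x3 -> E 0%N S0 ->
  mul (x0 + x1 + x2 + x3) (mu *: a + S0) = mu *: (x0 + x1 + x2 + x3) ->
  mul ((1 - eta) *: x1 - eta *: a - eta *: x0) (mu *: a + S0) =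
  mu *: ((1 - eta) *: x1 - eta *: a - eta *: x0).
Proof.
move=> X0 X1 X2 X3 S H.
have P := principle X0 X1 X2 X3 S H.
have [be ez1] : exists be, x1 = be *: a by apply/(axis_M1 Ha).
subst x1.
have -> : (1 - eta) *: (be *: a) - eta *: a = ((1 - eta) * be - eta) *: a.
  by rewrite scalerA scalerBl.
rewrite (mBl Hc) !(mZl Hc) !(mDr Hc) !(mZr Hc) eig1 ?E1a //.
rewrite (mC Hc a S0) eig0 // P eig0 // scaler0 addr0 add0r.
- by rewrite scalerBr !scalerA mulrC [mu * eta]mulrC.
- exact: E1a.
Qed.

End AxisLemmas.

Theorem corollary1 (F : fieldType) (M : lmodType F) (mul : M -> M -> M)
  (eta : F) (a : int -> M) (E : int -> nat -> M -> Prop) (lambda1 mu : F) :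
  comm_algebra_product mul ->
  (2%:R : F) != 0 ->
  eta != 0 -> eta != 1 -> eta != 2^-1 ->
  dihedral mul eta a E ->
  mul (a 0) (pp mul eta a 1 0) = ((1 - eta) * lambda1 - eta) *: a 0 ->
  mul (a 0) (pp mul eta a 2 1) =
    ((2 * eta - 1) * (4 * lambda1 - 3 * eta) / (2 * eta)) *:
      (2%:R *: pp mul eta a 1 0 + eta *: (a 1 + a (-1))) + mu *: a 0 ->
  lambda1 = 3 * eta / 4 ->
  pp mul eta a 2 1 = pp mul eta a 2 0 \/ mu = 0.
Proof.
move=> Hc H2 Heta _ _ Hd _ Hmu Hl.
set P := pp mul eta a 2.
have h4 : (4 : F) != 0.
  have -> : (4 : F) = 2%:R * 2%:R by rewrite -natrM.
  by rewrite mulf_neq0.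
have H0 : mul (a 0) (P 1) = mu *: a 0.
  have K0 : (2 * eta - 1) * (4 * (3 * eta / 4) - 3 * eta) / (2 * eta) = 0.
    by rewrite [4 * _]mulrC divfK // subrr mulr0 mul0r.
  by rewrite /P Hmu Hl K0 scale0r add0r.
have A0 := dih_axes Hd 0.
have [x0 [x1 [x2 [x3 [X0 X1 X2 X3 ex]]]]] := axis_span A0 (a 2).
have em : a (-2) = x0 + x1 + x2 + - x3.
  by have := dih_tau Hd (i:=2) (j:=0) X0 X1 X2 X3 ex; rewrite (_ : 2 * 0 - 2 = -2 :> int).
have eP0 : P 0 = (1 - eta) *: x1 - eta *: a 0 - eta *: x0.
  rewrite /P /pp addr0 ex; exact: (pp_form Hc A0 X0 X1 X2 X3).
have eP2 : P (-2) = P 0.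
  rewrite eP0 /P /pp subrr (mC Hc) [a (-2) + _]addrC em.
  by apply: (pp_form Hc A0 X0 X1 X2); apply: subN (E3s A0) _.
have [f [[fbij flin fmul] fa]] := dih_shift Hd.
have fD x y : f (x + y) = f x + f y by have := flin 1 x y; rewrite !scale1r.
have f0 : f 0 = 0.
  have := fD 0 0; rewrite addr0 => /(congr1 (fun v => v - f 0)).
  by rewrite subrr addrK => <-.
have fZ c x : f (c *: x) = c *: f x by have := flin c x 0; rewrite f0 !addr0.
have fB x y : f (x - y) = f x - f y by rewrite fD -scaleN1r fZ scaleN1r.
have fpp j : f (P j) = P (j + 1).
  by rewrite /P /pp fB fmul fZ fD !fa addrA.
have sh j k : P j = P k -> P (j + 1) = P (k + 1) by move=> e; rewrite -!fpp e.
have shH j : mul (a j) (P (j + 1)) = mu *: a j ->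
             mul (a (j + 1)) (P (j + 1 + 1)) = mu *: a (j + 1).
  by move=> e; rewrite -fpp -fa -fmul e fZ.
have e1 : P (-1) = P 1 by exact: (sh _ _ eP2).
have e2 : P 0 = P 2 by exact: (sh _ _ e1).
have e3 : P 1 = P 3 by exact: (sh _ _ e2).
have e4 : P 2 = P 4 by exact: (sh _ _ e3).
have HB : mul (a 1) (P 2) = mu *: a 1 by exact: (shH 0 H0).
have HA : mul (a 2) (P 3) = mu *: a 2 by exact: (shH 1 HB).
have HC : mul (a 3) (P 4) = mu *: a 3 by exact: (shH 2 HA).
have [S0 [SS eP1]] := E01 Hc A0 Heta H0.
have F0 : mul (P 0) (P 1) = mu *: P 0.
  have HA' : mul (a 2) (P 1) = mu *: a 2 by rewrite e3.
  rewrite eP0 eP1; apply: (frame Hc A0 X0 X1 X2 X3 SS).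
  by rewrite -ex -eP1.
have A1 := dih_axes Hd 1.
have HB' : mul (a 1) (P 0) = mu *: a 1 by rewrite e2.
have [T0 [TT eP0']] := E01 Hc A1 Heta HB'.
have [s0 [s1 [s2 [s3 [S0' S1 S2 S3 es]]]]] := axis_span A1 (a 3).
have eP1' : P 1 = (1 - eta) *: s1 - eta *: a 1 - eta *: s0.
  rewrite /P /pp; change (a (2 + 1)) with (a 3); rewrite es.
  exact: (pp_form Hc A1 S0' S1 S2 S3).
have F1 : mul (P 1) (P 0) = mu *: P 1.
  have HC' : mul (a 3) (P 0) = mu *: a 3 by rewrite e2 e4.
  rewrite eP1' eP0'; apply: (frame Hc A1 S0' S1 S2 S3 TT).
  by rewrite -es -eP0'.
have : mu *: P 0 = mu *: P 1 by rewrite -F0 -F1 (mC Hc).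
case: (eqVneq mu 0) => [->|mu0]; first by right.
by move=> /(scalerI mu0) ->; left.
Qed.
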